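(* Let $D=\mathrm{diag}(d_1,\dots,d_n)$ be real diagonal, $\beta_1,\beta_2\neq0$ real, $\mathbf v_1,\mathbf v_2\in\mathbb R^n$ with entries $v_{1q},v_{2q}$, and $M=D+\beta_1\mathbf v_1\mathbf v_1^T+\beta_2\mathbf v_2\mathbf v_2^T$. Fix an index $i$ such that $d_j\neq d_i$ for all $j\neq i$, and suppose $v_{1i}=0$ and $v_{2i}\neq0$. Define $f_{11}(\lambda)=1-\beta_1\sum_{q\neq i}\frac{v_{1q}^2}{\lambda-d_q}$. Then $d_i$ is an eigenvalue of $M$ if and only if $f_{11}(d_i)=0$; in that case the eigenspace is spanned by the vector $\mathbf x$ with $x_q=\frac{v_{1q}}{d_q-d_i}$ for $q\neq i$ and $x_i$ determined by $\mathbf v_2^T\mathbf x=0$, i.e. $x_i=-\frac1{v_{2i}}\sum_{q\ne i}v_{2q}x_q$. Symmetrically, if $v_{1i}\neq0$ and $v_{2i}=0$, then $d_i$ is an eigenvalue of $M$ iff $f_{12}(d_i)=0$, where $f_{12}(\lambda)=1-\beta_2\sum_{q\neq i}\frac{v_{2q}^2}{\lambda-d_q}$. *)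

(* Defs.v *)
From HB Require Import structures.
From mathcomp Require Import all_boot all_order all_algebra.
Set Implicit Arguments. Unset Strict Implicit. Unset Printing Implicit Defensive.
Import Order.TTheory GRing.Theory Num.Theory.
Local Open Scope ring_scope.

(* Vectors are row vectors 'rV_n; the diagonal of D is d : 'rV_n (d_q = d 0 q). *)

Definition rank2_mod {R : realFieldType} {n : nat} (d : 'rV[R]_n) (b1 b2 : R)
  (v1 v2 : 'rV[R]_n) : 'M[R]_n :=
  diag_mx d + b1 *: (v1^T *m v1) + b2 *: (v2^T *m v2).

Definition secular {R : realFieldType} {n : nat} (d : 'rV[R]_n) (b : R)
  (v : 'rV[R]_n) (i : 'I_n) (lam : R) : R :=
  1 - b * \sum_(q < n | q != i) (v 0 q) ^+ 2 / (lam - d 0 q).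

Definition eigvec {R : realFieldType} {n : nat} (d : 'rV[R]_n)
  (v1 v2 : 'rV[R]_n) (i : 'I_n) : 'rV[R]_n :=
  \row_(q < n)
    if q == i then
      - (v2 0 i)^-1 * \sum_(p < n | p != i) v2 0 p * (v1 0 p / (d 0 p - d 0 i))
    else v1 0 q / (d 0 q - d 0 i).

(* Main.v *)
Require Import Defs.
From HB Require Import structures.
From mathcomp Require Import all_boot all_order all_algebra.
From mathcomp Require Import ring lra.
Import Order.TTheory GRing.Theory Num.Theory.
Local Open Scope ring_scope.

Definition dotr {R : realFieldType} {n : nat} (x v : 'rV[R]_n) : R :=
  \sum_k x 0 k * v 0 k.

Lemma mulM (R : realFieldType) (n : nat) (d : 'rV[R]_n) (b1 b2 : R)
  (v1 v2 x : 'rV[R]_n) j :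
  (x *m rank2_mod d b1 b2 v1 v2) 0 j =
  x 0 j * d 0 j + b1 * dotr x v1 * v1 0 j + b2 * dotr x v2 * v2 0 j.
Proof.
rewrite /rank2_mod !mulmxDr -!scalemxAr !mulmxA mul_mx_diag !mxE !big_ord1 !mxE.
rewrite /dotr; congr (_ + _ + _); rewrite mulrA; congr (_ * _ * _);
by apply: eq_bigr => k _; rewrite !mxE.
Qed.

Section Key.
Variables (R : realFieldType) (n : nat) (d : 'rV[R]_n) (b1 b2 : R)
  (v1 v2 : 'rV[R]_n) (i : 'I_n).
Hypothesis (hb1 : b1 != 0) (hb2 : b2 != 0)
  (hd : forall j : 'I_n, j != i -> d 0 j != d 0 i)
  (hv1 : v1 0 i = 0) (hv2 : v2 0 i != 0).

Lemma key (x : 'rV[R]_n) :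
  x *m rank2_mod d b1 b2 v1 v2 = d 0 i *: x ->
  x = (- (b1 * dotr x v1)) *: eigvec d v1 v2 i /\
  dotr x v1 * secular d b1 v1 i (d 0 i) = 0.
Proof.
move=> E.
set s1 := dotr x v1; set s2 := dotr x v2.
have Ej j : x 0 j * d 0 j + b1 * s1 * v1 0 j + b2 * s2 * v2 0 j = d 0 i * x 0 j.
  by rewrite -mulM E mxE.
have s20 : s2 = 0.
  have := Ej i; rewrite hv1 mulr0 addr0 mulrC => /eqP.
  rewrite -subr_eq0 addrC addKr mulf_eq0 mulf_eq0 (negbTE hb2) (negbTE hv2).
  by rewrite orbF /= => /eqP.
have nz q : q != i -> d 0 i - d 0 q != 0.
  by move=> nq; rewrite subr_eq0 eq_sym hd.
have xq q : q != i -> x 0 q = b1 * s1 * v1 0 q / (d 0 i - d 0 q).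
  move=> nq; apply: (mulIf (nz q nq)); rewrite mulfVK ?nz //.
  have := Ej q; rewrite s20 mulr0 mul0r addr0 => H.
  rewrite mulrBr; lra.
split.
  apply/rowP => q; rewrite !mxE; case: eqP => [->|/eqP nq]; last first.
    rewrite xq //; have := nz q nq => h1.
    have h2 : d 0 q - d 0 i != 0 by rewrite subr_eq0 hd.
    by field; rewrite h1 h2.
  have : s2 = 0 by [].
  rewrite /s2 /dotr (bigD1 i) //=.
  have -> : \sum_(k < n | k != i) x 0 k * v2 0 k =
     (- (b1 * s1)) * \sum_(p < n | p != i) v2 0 p * (v1 0 p / (d 0 p - d 0 i)).
    rewrite mulr_sumr; apply: eq_bigr => k nk; rewrite xq //.
    have := nz k nk => h1.
    have h2 : d 0 k - d 0 i != 0 by rewrite subr_eq0 hd.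
    by field; rewrite h1 h2.
  set T := \sum_(p < n | p != i) _.
  move=> H; move: hv2 => h; apply: (mulIf h).
  have -> : - (b1 * s1) * (- (v2 0 i)^-1 * T) * v2 0 i = - (- (b1 * s1) * T).
    by field.
  lra.
have hs : s1 = \sum_(k < n | k != i) x 0 k * v1 0 k.
  by rewrite /s1 /dotr (bigD1 i) //= hv1 mulr0 add0r.
rewrite /secular -/s1 {1}hs mulrBr mulr1 mulr_sumr mulr_sumr -sumrB big1 // => k nk.
rewrite xq //; have := nz k nk => h1.
by rewrite -hs; field; rewrite h1.
Qed.

Lemma eig_ok : secular d b1 v1 i (d 0 i) = 0 ->
  eigvec d v1 v2 i *m rank2_mod d b1 b2 v1 v2 = d 0 i *: eigvec d v1 v2 i /\
  dotr (eigvec d v1 v2 i) v1 = - b1^-1.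
Proof.
move=> f0; set e := eigvec d v1 v2 i.
have nz q : q != i -> d 0 q - d 0 i != 0 by move=> nq; rewrite subr_eq0 hd.
have eq q : q != i -> e 0 q = v1 0 q / (d 0 q - d 0 i).
  by move=> nq; rewrite /e mxE (negbTE nq).
have hs1 : dotr e v1 = - b1^-1.
  rewrite /dotr (bigD1 i) //= hv1 mulr0 add0r.
  move: f0; rewrite /secular => /eqP; rewrite subr_eq0 => /eqP f0.
  have -> : \sum_(k < n | k != i) e 0 k * v1 0 k =
     - \sum_(q < n | q != i) v1 0 q ^+ 2 / (d 0 i - d 0 q).
    rewrite -sumrN; apply: eq_bigr => k nk; rewrite eq //.
    have := nz k nk => h1.
    have h2 : d 0 i - d 0 k != 0 by rewrite subr_eq0 eq_sym hd.
    by field; rewrite h1 h2.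
  congr (- _); apply: (mulfI hb1); rewrite mulfV //.
have hs2 : dotr e v2 = 0.
  rewrite /dotr (bigD1 i) //=.
  set T := \sum_(p < n | p != i) v2 0 p * (v1 0 p / (d 0 p - d 0 i)).
  have -> : \sum_(k < n | k != i) e 0 k * v2 0 k = T.
    by apply: eq_bigr => k nk; rewrite eq // mulrC.
  rewrite /e mxE eqxx -/T; move: hv2 => h; by field.
split => //.
apply/rowP => j; rewrite mulM hs1 hs2 [in RHS]mxE.
case: (eqVneq j i) => [->|nj].
  by rewrite hv1; ring.
rewrite !eq //; have := nz j nj => h1; move: hb1 => h.
by field; rewrite h1 h.
Qed.

Lemma case1 :
  (eigenvalue (rank2_mod d b1 b2 v1 v2) (d 0 i) <-> secular d b1 v1 i (d 0 i) = 0)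
  /\ (secular d b1 v1 i (d 0 i) = 0 ->
      (eigenspace (rank2_mod d b1 b2 v1 v2) (d 0 i) :=: eigvec d v1 v2 i)%MS).
Proof.
have enz : secular d b1 v1 i (d 0 i) = 0 -> eigvec d v1 v2 i != 0.
  move=> f0; apply/eqP => e0; have [_] := eig_ok f0.
  rewrite e0 /dotr big1 => [/eqP|k _]; last by rewrite mxE mul0r.
  by rewrite eq_sym oppr_eq0 invr_eq0 (negbTE hb1).
split; first split.
- case/eigenvalueP => x E xnz.
  have [xe /eqP] := key _ E; rewrite mulf_eq0 => /orP[/eqP s0|/eqP //].
  by move: xnz; rewrite xe s0 mulr0 oppr0 scale0r eqxx.
- move=> f0; apply/eigenvalueP; exists (eigvec d v1 v2 i); last exact: enz.
  by have [] := eig_ok f0.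
move=> f0; apply/eqmxP/andP; split.
  apply/row_subP => k; have /eigenspaceP E := row_sub k (eigenspace (rank2_mod d b1 b2 v1 v2) (d 0 i)).
  have [-> _] := key _ E.
  by apply: scalemx_sub; exact: submx_refl.
by apply/eigenspaceP; have [] := eig_ok f0.
Qed.
End Key.

Theorem mainTheorem3 (R : realFieldType) (n : nat) (d : 'rV[R]_n) (b1 b2 : R)
  (v1 v2 : 'rV[R]_n) (i : 'I_n)
  (hb1 : b1 != 0) (hb2 : b2 != 0)
  (hd : forall j : 'I_n, j != i -> d 0 j != d 0 i) :
  (v1 0 i = 0 -> v2 0 i != 0 ->
     (eigenvalue (rank2_mod d b1 b2 v1 v2) (d 0 i) <-> secular d b1 v1 i (d 0 i) = 0)
     /\ (secular d b1 v1 i (d 0 i) = 0 ->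
           (eigenspace (rank2_mod d b1 b2 v1 v2) (d 0 i) :=: eigvec d v1 v2 i)%MS))
  /\
  (v1 0 i != 0 -> v2 0 i = 0 ->
     (eigenvalue (rank2_mod d b1 b2 v1 v2) (d 0 i) <-> secular d b2 v2 i (d 0 i) = 0)).
Proof.
split=> h1 h2; first exact: case1.
have -> : rank2_mod d b1 b2 v1 v2 = rank2_mod d b2 b1 v2 v1.
  by rewrite /rank2_mod addrAC.
by have [] := case1 _ _ d b2 b1 v2 v1 i hb2 hb1 hd h2 h1.

Qed.
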